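(* If $f:K\to L$ is a $\times$-homotopy equivalence of simplicial complexes, then $\mathrm{Sing}(f):\mathrm{Sing}(K)\to\mathrm{Sing}(L)$ is a weak equivalence of simplicial sets (Kan–Quillen).
   Context: A simplicial complex $K$ consists of a set $V(K)$ and a collection of nonempty finite subsets (simplices) containing all singletons and closed under nonempty subsets; maps are vertex functions sending simplices to simplices; $\mathbf{Cpx}$ is the category. The product $K\times L$ has vertex set $V(K)\times V(L)$, a finite set being a simplex iff both of its projections are simplices. $I_n$ ($n\ge1$) is the complex on $\{0,\dots,n\}$ whose simplices are singletons and the edges $\{i,i+1\}$. Two maps $f,g:K\to L$ are $\times$-homotopic if for some $n\ge1$ there is a map $H:K\times I_n\to L$ with $H(-,0)=f$ and $H(-,n)=g$. A map $f:K\to L$ is a $\times$-homotopy equivalence if there is $g:L\to K$ with $gf$ $\times$-homotopic to $1_K$ and $fg$ $\times$-homotopic to $1_L$. $\mathbf{\Delta}^n$ is the complex on $\{0,\dots,n\}$ with all nonempty subsets simplices and $\mathrm{Sing}(K)_n=\mathbf{Cpx}(\mathbf{\Delta}^n,K)$ with simplicial operators by precomposition. *)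

(* Defs.v *)
From Stdlib Require Import ProofIrrelevance Relation_Operators.
From Stdlib Require List.
From mathcomp Require Import all_boot.
Set Implicit Arguments. Unset Strict Implicit. Unset Printing Implicit Defensive.

Definition image {A B : Type} (f : A -> B) (s : A -> Prop) : B -> Prop :=
  fun y => exists x, s x /\ f x = y.

Definition nonempty_finite {A : Type} (s : A -> Prop) : Prop :=
  (exists x, s x) /\ exists l : list A, forall x, s x <-> List.In x l.

Record Cpx := {
  cV : Type;
  simplex : (cV -> Prop) -> Prop;
  simplex_fin : forall s, simplex s -> nonempty_finite s;
  simplex_single : forall v : cV, simplex (fun x => x = v);
  simplex_sub : forall s t : cV -> Prop, simplex s -> (exists x, t x) ->
                  (forall x, t x -> s x) -> simplex t }.

Definition preserves {A B : Type} (SA : (A -> Prop) -> Prop)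
  (SB : (B -> Prop) -> Prop) (f : A -> B) : Prop :=
  forall s, SA s -> SB (image f s).

Definition is_cmap (K L : Cpx) (f : cV K -> cV L) : Prop :=
  preserves (@simplex K) (@simplex L) f.

Definition prod_simplex {A B : Type} (SA : (A -> Prop) -> Prop)
  (SB : (B -> Prop) -> Prop) (s : A * B -> Prop) : Prop :=
  nonempty_finite s /\ SA (image fst s) /\ SB (image snd s).

(* simplices of I_n, on the vertex set {0,...,n} = 'I_n.+1 *)
Definition interval_simplex (n : nat) (s : 'I_n.+1 -> Prop) : Prop :=
  exists i : 'I_n.+1,
    (forall x, s x <-> x = i) \/
    (forall x, s x <-> x = i \/ nat_of_ord x = (nat_of_ord i).+1).

Definition xhomotopic (K L : Cpx) (f g : cV K -> cV L) : Prop :=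
  exists n : nat, 0 < n /\
    exists H : cV K * 'I_n.+1 -> cV L,
      preserves (prod_simplex (@simplex K) (@interval_simplex n)) (@simplex L) H
      /\ (forall v, H (v, ord0) = f v)
      /\ (forall v, H (v, ord_max) = g v).

Definition xhtpy_equiv (K L : Cpx) (f : cV K -> cV L) : Prop :=
  exists g : cV L -> cV K, is_cmap g /\
    xhomotopic (fun v => g (f v)) (fun v => v) /\
    xhomotopic (fun w => f (g w)) (fun w => w).

Definition mono_map (m n : nat) :=
  {h : 'I_m.+1 -> 'I_n.+1 | forall i j : 'I_m.+1, i <= j -> h i <= h j}.

Definition mono_id (n : nat) : mono_map n n :=
  exist (fun h : 'I_n.+1 -> 'I_n.+1 => forall i j : 'I_n.+1, i <= j -> h i <= h j) (fun i => i) (fun i j h => h).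

Definition mono_comp (k m n : nat) (g : mono_map m n) (f : mono_map k m) :
  mono_map k n :=
  exist (fun h : 'I_k.+1 -> 'I_n.+1 => forall i j : 'I_k.+1, i <= j -> h i <= h j)
    (fun i => sval g (sval f i))
    (fun i j hij => proj2_sig g _ _ (proj2_sig f _ _ hij)).

Record sSet := {
  sx : nat -> Type;
  sact : forall m n : nat, mono_map m n -> sx n -> sx m;
  sact_id : forall n (x : sx n), sact (mono_id n) x = x;
  sact_comp : forall k m n (g : mono_map m n) (f : mono_map k m) (x : sx n),
      sact (mono_comp g f) x = sact f (sact g x) }.

Arguments sact s {m n} f x.
Arguments sx s n.

Unset Implicit Arguments.
Record sMap (X Y : sSet) := {
  smap :> forall n, sx X n -> sx Y n;
  smap_nat : forall m n (f : mono_map m n) (x : sx X n),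
      smap m (sact X f x) = sact Y f (smap n x) }.
Set Implicit Arguments.
Arguments smap {X Y} s n x.
Arguments smap_nat {X Y} s m n f x.

Definition smap_comp (X Y Z : sSet) (g : sMap Y Z) (f : sMap X Y) : sMap X Z.
Proof.
  refine {| smap := fun n x => g n (f n x) |}.
  by move=> m n h x; rewrite smap_nat smap_nat.
Defined.

Definition const_mono (n : nat) (b : 'I_2) : mono_map n 1 :=
  exist (fun h : 'I_n.+1 -> 'I_2 => forall i j : 'I_n.+1, i <= j -> h i <= h j)
    (fun _ => b) (fun _ _ _ => leqnn _).

(* elementary homotopy g ~ g' : a map X x Delta[1] -> Y (written out levelwise,
   Delta[1]_n = monotone maps [n] -> [1]) restricting to g at 0 and g' at 1 *)
Definition elem_homotopy (X Y : sSet) (g g' : sMap X Y) : Prop :=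
  exists H : forall n, sx X n -> mono_map n 1 -> sx Y n,
    (forall m n (f : mono_map m n) (x : sx X n) (t : mono_map n 1),
        H m (sact X f x) (mono_comp t f) = sact Y f (H n x t))
    /\ (forall n x, H n x (const_mono n ord0) = g n x)
    /\ (forall n x, H n x (const_mono n ord_max) = g' n x).

Definition shomotopic (X Y : sSet) : sMap X Y -> sMap X Y -> Prop :=
  clos_refl_sym_trans _ (@elem_homotopy X Y).

Lemma lift_mono (p : nat) (k : 'I_p.+2) (i j : 'I_p.+1) :
  i <= j -> lift k i <= lift k j.
Proof.
  move=> hij; rewrite /= /bump.
  case: (leqP k i) => hi; case: (leqP k j) => hj /=.
  - by rewrite !add1n ltnS.
  - by move: (leq_trans hi hij); rewrite leqNgt hj.
  - by rewrite add0n add1n ltnW // ltnS.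
  - by rewrite !add0n.
Qed.

Definition coface (p : nat) (i : 'I_p.+2) : mono_map p p.+1 :=
  exist (fun h : 'I_p.+1 -> 'I_p.+2 => forall i j : 'I_p.+1, i <= j -> h i <= h j)
    (lift i) (@lift_mono p i).

(* a map from the horn Lambda^{p+1}_k into Z: a family of p-simplices indexed by
   the faces i <> k, agreeing on (all simplices of) the pairwise intersections *)
Definition horn_compatible (Z : sSet) (p : nat) (k : 'I_p.+2)
  (x : forall i : 'I_p.+2, i != k -> sx Z p) : Prop :=
  forall (i j : 'I_p.+2) (hi : i != k) (hj : j != k) (m : nat) (a b : mono_map m p),
    (forall t, lift i (sval a t) = lift j (sval b t)) ->
    sact Z a (x i hi) = sact Z b (x j hj).

Definition Kan (Z : sSet) : Prop :=
  forall (p : nat) (k : 'I_p.+2) (x : forall i : 'I_p.+2, i != k -> sx Z p),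
    horn_compatible x ->
    exists y : sx Z p.+1, forall (i : 'I_p.+2) (hi : i != k),
      sact Z (coface i) y = x i hi.

(* Kan--Quillen weak equivalence (weak homotopy equivalence): for every Kan
   complex Z, precomposition with f induces a bijection on homotopy classes
   [Y, Z] -> [X, Z]. *)
Definition weak_equiv (X Y : sSet) (f : sMap X Y) : Prop :=
  forall Z : sSet, Kan Z ->
    (forall h : sMap X Z, exists g : sMap Y Z, shomotopic (smap_comp g f) h) /\
    (forall g g' : sMap Y Z,
        shomotopic (smap_comp g f) (smap_comp g' f) -> shomotopic g g').

Definition Delta_simplex (n : nat) : ('I_n.+1 -> Prop) -> Prop :=
  @nonempty_finite 'I_n.+1.
Arguments Delta_simplex : clear implicits.

Definition Sing_n (K : Cpx) (n : nat) :=
  {s : 'I_n.+1 -> cV K | preserves (Delta_simplex n) (@simplex K) s}.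

Lemma image_nonempty_finite {A B : Type} (f : A -> B) (s : A -> Prop) :
  nonempty_finite s -> nonempty_finite (image f s).
Proof.
  case=> [[x hx] [l hl]]; split; first by exists (f x), x.
  exists (List.map f l) => y; split.
  - by case=> z [hz <-]; apply: List.in_map; apply/hl.
  - by case/List.in_map_iff=> z [<- hz]; exists z; split=> //; apply/hl.
Qed.

Lemma preserves_comp {A B : Type} (SA : (A -> Prop) -> Prop)
  (SB : (B -> Prop) -> Prop) (K : Cpx) (f : A -> B) (g : B -> cV K) :
  (forall s, SA s -> nonempty_finite s) ->
  preserves SA SB f -> preserves SB (@simplex K) g ->
  preserves SA (@simplex K) (fun a => g (f a)).
Proof.
  move=> hfin hf hg s hs.
  apply: (simplex_sub (hg _ (hf _ hs))).
  - by case: (hfin _ hs) => [[x hx] _]; exists (g (f x)), x.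
  - by move=> y [x [hx <-]]; exists (f x); split=> //; exists x.
Qed.

Lemma mono_preserves (m n : nat) (f : mono_map m n) :
  preserves (Delta_simplex m) (Delta_simplex n) (sval f).
Proof. by move=> s hs; apply: image_nonempty_finite. Qed.

Definition Sing_act (K : Cpx) (m n : nat) (f : mono_map m n) (s : Sing_n K n) :
  Sing_n K m :=
  exist _ (fun i => sval s (sval f i))
    (preserves_comp (fun s hs => hs) (@mono_preserves m n f) (proj2_sig s)).

Definition Sing (K : Cpx) : sSet.
Proof.
  refine {| sx := Sing_n K; sact := @Sing_act K |}.
  - by move=> n [s hs]; rewrite /Sing_act /=; congr exist; apply: proof_irrelevance.
  - by move=> k m n g f [s hs]; rewrite /Sing_act /=; congr exist;
       apply: proof_irrelevance.
Defined.

Definition Sing_map_n (K L : Cpx) (f : cV K -> cV L) (hf : is_cmap f) (n : nat)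
  (s : Sing_n K n) : Sing_n L n :=
  exist _ (fun i => f (sval s i))
    (preserves_comp (fun s hs => hs) (proj2_sig s) hf).

Definition Sing_map (K L : Cpx) (f : cV K -> cV L) (hf : is_cmap f) :
  sMap (Sing K) (Sing L).
Proof.
  refine (@Build_sMap (Sing K) (Sing L) (@Sing_map_n K L f hf) _).
  by move=> m n g [s hs]; rewrite /Sing_map_n /=; congr exist;
     apply: proof_irrelevance.
Defined.

(* Main.v *)
Require Import Defs.
From mathcomp Require Import all_boot.
From Stdlib Require Import ProofIrrelevance FunctionalExtensionality Relation_Operators.
From Stdlib Require List.

Lemma sig_eq {A : Type} {P : A -> Prop} (x y : sig P) : sval x = sval y -> x = y.
Proof.
  case: x => x px; case: y => y py /= e; subst y; congr exist; apply: proof_irrelevance.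
Qed.

Lemma sMap_ext (X Y : sSet) (P Q : sMap X Y) :
  (forall n x, P n x = Q n x) -> P = Q.
Proof.
  case: P => p hp; case: Q => q hq /= e.
  have epq : p = q.
    apply: functional_extensionality_dep => n; apply: functional_extensionality => x; exact: e.
  subst q; congr Build_sMap; apply: proof_irrelevance.
Qed.

Definition sid (X : sSet) : sMap X X.
Proof. refine {| smap := fun n x => x |}. by []. Defined.

Lemma interval_ext n (P Q : 'I_n.+1 -> Prop) :
  (forall x, P x <-> Q x) -> interval_simplex P -> interval_simplex Q.
Proof.
  move=> e [i [h|h]]; exists i; [left|right] => x; rewrite -e; exact: h.
Qed.

Lemma interval_eq n (a b : 'I_n.+1) : val b = val a ->
  interval_simplex (fun c => c = a \/ c = b).
Proof.
  move=> e; have eb : b = a by apply: val_inj.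
  subst b; exists a; left => x; split; [by case | by left].
Qed.

Lemma interval_succ n (a b : 'I_n.+1) : val b = (val a).+1 ->
  interval_simplex (fun c => c = a \/ c = b).
Proof.
  move=> e; exists a; right => x; split.
  - by case=> ->; [left | right].
  - by case=> [->|h]; [left | right; apply: val_inj; rewrite /= h e].
Qed.

Lemma pairset (K : Cpx) n (s : cV K -> Prop) (a b : 'I_n.+1) :
  simplex s -> interval_simplex (fun c => c = a \/ c = b) ->
  prod_simplex (@simplex K) (@interval_simplex n)
    (fun vc => s vc.1 /\ (vc.2 = a \/ vc.2 = b)).
Proof.
  move=> hs hI.
  have [[x0 hx0] [l hl]] := simplex_fin hs.
  split; [split|split].
  - by exists (x0, a); split=> //; left.
  - exists (List.flat_map (fun v => (v, a) :: (v, b) :: nil) l) => [[v c]].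
    rewrite List.in_flat_map /=; split.
    + case=> hv hc; exists v; split; first by apply/hl.
      by case: hc => ->; [left|right; left].
    + case=> w [hw hin]; case: hin => [[<- <-]|[[<- <-]|[]]]; (split; [by apply/hl|]);
        by [left|right].
  - apply: (simplex_sub hs); first by exists x0, (x0, a); split=> //; split=> //; left.
    by move=> v [[w c] [[hw _] <-]].
  - apply: (@interval_ext n _ _ _ hI) => c; split.
    + by move=> hc; exists (x0, c).
    + by case=> [[w d] [[_ hd] <-]].
Qed.

Arguments pairset {K n s a b}.
Arguments interval_eq {n a b}.
Arguments interval_succ {n a b}.

Section Htpy.
Variables (K L : Cpx) (n : nat) (H : cV K * 'I_n.+1 -> cV L).
Hypothesis hH : preserves (prod_simplex (@simplex K) (@interval_simplex n)) (@simplex L) H.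

Lemma slice_cmap (c : 'I_n.+1) : is_cmap (fun v => H (v, c)).
Proof.
  move=> s hs.
  have hP := hH _ (pairset hs (interval_eq (erefl (val c)))).
  have [[x0 hx0] _] := simplex_fin hs.
  apply: (simplex_sub hP).
  - by exists (H (x0, c)), x0.
  - move=> y [v [hv <-]]; exists (v, c); split=> //; split=> //; by left.
Qed.

Definition hfun (a b : 'I_n.+1) m (x : Sing_n K m) (t : mono_map m 1) : 'I_m.+1 -> cV L :=
  fun j => if val (sval t j) == 0 then H (sval x j, a) else H (sval x j, b).

Arguments hfun a b {m} x t.

Lemma hfun_pres (a b : 'I_n.+1) (hI : interval_simplex (fun c => c = a \/ c = b))
  m (x : Sing_n K m) (t : mono_map m 1) :
  preserves (Delta_simplex m) (@simplex L) (hfun a b x t).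
Proof.
  move=> s hs.
  have hsx : simplex (Defs.image (sval x) s) := proj2_sig x s hs.
  have hP := hH _ (pairset hsx hI).
  have [[j0 hj0] _] := hs.
  apply: (simplex_sub hP).
  - by exists (hfun a b x t j0), j0.
  - move=> y [j [hj <-]]; rewrite /hfun.
    case: ifP => _; [exists (sval x j, a) | exists (sval x j, b)];
      (split=> //; split; [by exists j | by [left|right]]).
Qed.

Arguments hfun_pres {a b} hI {m} x t.

Lemma G_htpy (a b : 'I_n.+1) (hI : interval_simplex (fun c => c = a \/ c = b))
  (P Q : sMap (Sing K) (Sing L)) :
  (forall m (x : Sing_n K m) j, sval (P m x) j = H (sval x j, a)) ->
  (forall m (x : Sing_n K m) j, sval (Q m x) j = H (sval x j, b)) ->
  elem_homotopy P Q.
Proof.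
  move=> hP hQ.
  exists (fun m x t => exist _ (hfun a b x t) (hfun_pres hI x t)); split; [|split].
  - by move=> m m' f x t; apply: sig_eq.
  - move=> m x; apply: sig_eq; apply: functional_extensionality => j.
    by rewrite hP /hfun /=.
  - move=> m x; apply: sig_eq; apply: functional_extensionality => j.
    by rewrite hQ /hfun /=.
Qed.

Definition slice_map (c : 'I_n.+1) : sMap (Sing K) (Sing L) :=
  Sing_map (slice_cmap c).

End Htpy.

Arguments slice_map {K L n H} hH c.

Lemma xhtpy_shom (K L : Cpx) (p q : cV K -> cV L) (P Q : sMap (Sing K) (Sing L)) :
  xhomotopic p q ->
  (forall m (x : Sing_n K m) j, sval (P m x) j = p (sval x j)) ->
  (forall m (x : Sing_n K m) j, sval (Q m x) j = q (sval x j)) ->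
  shomotopic P Q.
Proof.
  move=> [n [n0 [H [hH [h0 h1]]]]] hP hQ.
  have chain : forall k, k <= n -> shomotopic P (slice_map hH (inord k)).
    elim=> [_|k IH hk].
    - apply: rst_step; apply: (@G_htpy _ _ _ _ hH ord0 (inord 0)).
      + by apply: interval_eq; rewrite /= inordK.
      + by move=> m x j; rewrite hP h0.
      + by [].
    - apply: rst_trans (IH (ltnW hk)) _.
      apply: rst_step; apply: (@G_htpy _ _ _ _ hH (inord k) (inord k.+1)) => //.
      apply: interval_succ; rewrite /= !inordK //; exact: ltnW.
  apply: rst_trans (chain n (leqnn n)) _.
  apply: rst_step; apply: (@G_htpy _ _ _ _ hH (inord n) ord_max) => //.
  - by apply: interval_eq; rewrite /= inordK.
  - by move=> m x j; rewrite hQ h1.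
Qed.

Lemma post_shom (X Y Z : sSet) (h : sMap Y Z) (g g' : sMap X Y) :
  shomotopic g g' -> shomotopic (smap_comp h g) (smap_comp h g').
Proof.
  elim=> [u v [H [hn [e0 e1]]]| u | u v _ IH | u v w _ IH1 _ IH2].
  - apply: rst_step; exists (fun n x t => h n (H n x t)); split; [|split].
    + by move=> m n f x t; rewrite hn smap_nat.
    + by move=> n x /=; rewrite e0.
    + by move=> n x /=; rewrite e1.
  - exact: rst_refl.
  - exact: rst_sym.
  - exact: rst_trans IH2.
Qed.

Lemma pre_shom (X Y Z : sSet) (h : sMap X Y) (g g' : sMap Y Z) :
  shomotopic g g' -> shomotopic (smap_comp g h) (smap_comp g' h).
Proof.
  elim=> [u v [H [hn [e0 e1]]]| u | u v _ IH | u v w _ IH1 _ IH2].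
  - apply: rst_step; exists (fun n x t => H n (h n x) t); split; [|split].
    + by move=> m n f x t; rewrite smap_nat hn.
    + by move=> n x /=; rewrite e0.
    + by move=> n x /=; rewrite e1.
  - exact: rst_refl.
  - exact: rst_sym.
  - exact: rst_trans IH2.
Qed.

Arguments post_shom {X Y Z} h {g g'}.
Arguments pre_shom {X Y Z} h {g g'}.

Theorem proposition2p36 (K L : Cpx) (f : cV K -> cV L) (hf : is_cmap f) :
  xhtpy_equiv f -> weak_equiv (Sing_map hf).
Proof.
  move=> [g [hg [x1 x2]]].
  set F := Sing_map hf; set G := Sing_map hg.
  have GF : shomotopic (smap_comp G F) (sid (Sing K)).
    by apply: (xhtpy_shom _ _ _ _ _ _ x1).
  have FG : shomotopic (smap_comp F G) (sid (Sing L)).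
    by apply: (xhtpy_shom _ _ _ _ _ _ x2).
  move=> Z _; split.
  - move=> h; exists (smap_comp h G).
    have -> : smap_comp (smap_comp h G) F = smap_comp h (smap_comp G F)
      by apply: sMap_ext.
    have {2}-> : h = smap_comp h (sid _) by apply: sMap_ext.
    exact: post_shom.
  - move=> g1 g2 hs.
    have := pre_shom G hs.
    have -> : smap_comp (smap_comp g1 F) G = smap_comp g1 (smap_comp F G)
      by apply: sMap_ext.
    have -> : smap_comp (smap_comp g2 F) G = smap_comp g2 (smap_comp F G)
      by apply: sMap_ext.
    move=> hs'.
    have e1 : g1 = smap_comp g1 (sid _) by apply: sMap_ext.
    have e2 : g2 = smap_comp g2 (sid _) by apply: sMap_ext.
    rewrite e1 e2.
    apply: rst_trans (rst_sym _ _ _ _ (post_shom g1 FG)) _.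
    exact: rst_trans hs' (post_shom g2 FG).
Qed.
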